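(* Let $k>1$ and let $\varphi$ be as in the context. If $M,N\models\varphi$, $M$ is a substructure of $N$, and $N$ has a solution, then $M$ has a solution.
   Context: Fix a natural number $k>1$. $Z_2=\{0,1\}$ is the two-element group. The language $\mathcal{L}$ consists of: unary predicates $I,K,R,P,G^a,H^a$; binary predicates $\in$ and $H^b$; ternary predicates $\pi,\rho,+,G^b$; a 4-ary predicate $h$; a 5-ary predicate $g$; a $(k+1)$-ary predicate $Q_l$ for each $l<\omega$; and constants $c_a$ for each $a\in Z_2\cup\omega$. $K(M),I(M)$ denote the interpretations of $K,I$ in $M$. $T$ is the collection of the following conditions on an $\mathcal{L}$-structure: (1) $I$ is infinite, $K$ is (identified via $\in$ with) the collection of $k$-element subsets of $I$, and $\in$ is membership between elements of $I$ and of $K$. (2) $I,K,R,G^a,H^a$ are pairwise disjoint and their union with the constants $c_a$, $a\in Z_2$, is $P$. (3) $R(c_a)$ for every $a\in\omega$. (4) $G^b(l,u,x)$ implies $R(l)$, $K(u)$; $H^b(u,x)$ implies $K(u)$. (5) If $x\notin P$ then $G^b(l,u,x)$ for some $l,u$ or $H^b(u,x)$ for some $u$; for all $l\in R$, $u,v\in K$, the sets $P$, $H^b(u,-)$, $G^b(l,v,-)$ are pairwise disjoint. (6) $\pi(u,a,z)$ implies $K(u)$, $G^a(a)$, $z$ a constant indexed by $Z_2$. (7) $\rho(l,b,z)$ implies $R(l)$, $H^a(b)$, $z$ a constant indexed by $Z_2$. (8) $g(l,u,a,v,w)$ implies $R(l),K(u),G^a(a),G^b(l,u,v),G^b(l,u,w)$.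 (9) $h(u,b,x,y)$ implies $K(u),H^a(b),H^b(u,x),H^b(u,y)$. (10) The constants $c_a$, $a\in Z_2$, with $+$ form a copy of $Z_2$. (11) $+$ on $G^a$ gives a subgroup of $\prod_K Z_2$ containing $\coprod_K Z_2$, projections given by $\pi$. (12) $+$ on $H^a$ gives a subgroup of $\prod_R Z_2$ containing $\coprod_R Z_2$, projections given by $\rho$. (13) For $l\in R,u\in K$, $G^b(l,u,-)\neq\emptyset$, and for each $x$ with $G^b(l,u,x)$, $g(l,u,-,x,-)$ is a bijection from $G^a$ onto $G^b(l,u,-)$; $g(l,u,x,y,z)\Rightarrow g(l,u,x,z,y)$; $g(l,u,a,x,y)\wedge g(l,u,b,y,z)\Rightarrow g(l,u,a+b,x,z)$. (14) For $u\in K$, $H^b(u,-)\ne\emptyset$, and for each $x$ with $H^b(u,x)$, $h(u,-,x,-)$ is a bijection from $H^a$ onto $H^b(u,-)$; $h(u,x,y,z)\Rightarrow h(u,x,z,y)$; $h(u,a,x,y)\wedge h(u,b,y,z)\Rightarrow h(u,a+b,x,z)$. (15) If $Q_l(x_0,\dots,x_k)$ then $G^b(c_l,u_i,x_i)$ for some $u_i\in K$ ($i<k$), $H^b(u_k,x_k)$ for some $u_k\in K$, $u_0,\dots,u_k$ are all the $k$-element subsets of some $(k+1)$-element subset of $I$, and $Q_l(x_{\sigma(0)},\dots,x_{\sigma(k-1)},x_k)$ for every permutation $\sigma$ of $k$. (16) If $Q_l(x_0,\dots,x_k)$, $G^b(c_l,u,x_0)$, $H^b(v,x_k)$, $G^b(c_l,u,x_0')$,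 $H^b(v,x_k')$, then $Q_l(x_0',x_1,\dots,x_k)$ iff the $v$-projection via $\pi$ of the unique $a$ with $g(c_l,u,a,x_0,x_0')$ is $0$, and $Q_l(x_0,\dots,x_{k-1},x_k')$ iff the $c_l$-projection via $\rho$ of the unique $a$ with $h(v,a,x_k,x_k')$ is $0$. (17) For $l\in\omega$, $u\in K$, distinct $i_0,\dots,i_{n-1}\in I\setminus u$, with $v^j_1,\dots,v^j_k$ listing the $k$-subsets of $u\cup\{i_j\}$ other than $u$: if $G^b(c_l,v^j_i,x^j_i)$ ($j<n$, $1\le i<k$) and $H^b(v^j_k,y_j)$ ($j<n$), then $\exists x\bigwedge_{j<n}Q_l(x,x^j_1,\dots,x^j_{k-1},y_j)$. $\varphi$ is the $\mathcal{L}_{\omega_1\omega}$ sentence which is the conjunction of $T$ with: $R$ contains only the constants $c_l$, $l\in\omega$; $G^a$ is canonically isomorphic (via $\pi$) to $\coprod_K Z_2$; $H^a$ is canonically isomorphic (via $\rho$) to $\coprod_\omega Z_2$. Solutions: for $M\models T$, $W\subseteq(\omega\times K(M))\cup K(M)$ and $f:W\to M$, $f$ is a solution for $W$ if (i) $(l,u)\in W$ implies $M\models G^b(c_l,u,f(l,u))$; (ii) $u\in W$ implies $M\models H^b(u,f(u))$; (iii) whenever $u_0,\dots,u_k\in K(M)$ are all the $k$-element subsets of some $(k+1)$-element subset of $I(M)$, $(l,u_i)\in W$ for all $i<k$ and $u_k\in W$, then $M\models Q_l(f(l,u_0),\dots,f(l,u_{k-1}),f(u_k))$. $M$ has a solution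 if there is a solution for $(\omega\times K(M))\cup K(M)$. *)

(* Defs.v *)
From mathcomp Require Import all_boot all_fingroup.
From Stdlib Require List.

Set Implicit Arguments.
Unset Strict Implicit.
Unset Printing Implicit Defensive.

(* Z_2 = bool; the constant c_a for a in Z_2 is [c2 M a] (c2 M false = c_0); for a in omega it is [cw M a]. *)
(* The (k+1)-ary predicate Q_l(x_0,...,x_{k-1},x_k) is rendered as    *)
(* [Q M l xs xk] with xs : 'I_k -> carrier listing x_0..x_{k-1}.       *)
Record Lstr (k : nat) := {
  car : Type;
  Ip : car -> Prop;  Kp : car -> Prop;  Rp : car -> Prop;  Pp : car -> Prop;
  Ga : car -> Prop;  Ha : car -> Prop;
  memb : car -> car -> Prop;
  Hb : car -> car -> Prop;
  pi : car -> car -> car -> Prop;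
  rho : car -> car -> car -> Prop;
  pl : car -> car -> car -> Prop;
  Gb : car -> car -> car -> Prop;
  hh : car -> car -> car -> car -> Prop;
  gg : car -> car -> car -> car -> car -> Prop;
  Q : nat -> ('I_k -> car) -> car -> Prop;
  c2 : bool -> car;
  cw : nat -> car
}.

Definition disj (T : Type) (A B : T -> Prop) := forall x, A x -> B x -> False.

Definition finsize (T : Type) (S : T -> Prop) (n : nat) :=
  exists s : list T, List.length s = n /\ List.NoDup s /\
    forall x, S x <-> List.In x s.

Section TheoryDefs.
Variables (k : nat) (M : Lstr k).
Local Notation U := (car M).
Local Notation I := (@Ip _ M). Local Notation K := (@Kp _ M).
Local Notation R := (@Rp _ M). Local Notation P := (@Pp _ M).
Local Notation Ga := (@Ga _ M). Local Notation Ha := (@Ha _ M).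
Local Notation mem := (@memb _ M). Local Notation Hb := (@Hb _ M).
Local Notation pi := (@pi _ M). Local Notation rho := (@rho _ M).
Local Notation pl := (@pl _ M). Local Notation Gb := (@Gb _ M).
Local Notation h := (@hh _ M). Local Notation g := (@gg _ M).
Local Notation Q := (@Q _ M). Local Notation c2 := (@c2 _ M). Local Notation cw := (@cw _ M).

(* us (indices 0..k-1) together with w are exactly the k-element subsets
   of the (k+1)-element subset S of I, each listed once. *)
Definition facesOn (S : U -> Prop) (us : 'I_k -> U) (w : U) :=
  finsize S k.+1 /\ (forall x, S x -> I x) /\
  K w /\ (forall x, mem x w -> S x) /\
  (forall i, K (us i) /\ forall x, mem x (us i) -> S x) /\
  injective us /\ (forall i, us i <> w).

Definition faces (us : 'I_k -> U) (w : U) := exists S, facesOn S us w.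

Definition isZ2 (z : U) := z = c2 false \/ z = c2 true.

Definition T1 :=
  (~ exists s : list U, forall x, I x -> List.In x s) /\
  (forall x u, mem x u -> I x /\ K u) /\
  (forall u, K u -> finsize (fun x => mem x u) k) /\
  (forall u v, K u -> K v -> (forall x, mem x u <-> mem x v) -> u = v) /\
  (forall S : U -> Prop, (forall x, S x -> I x) -> finsize S k ->
     exists u, K u /\ forall x, mem x u <-> S x).

Definition T2 :=
  disj I K /\ disj I R /\ disj I Ga /\ disj I Ha /\ disj K R /\
  disj K Ga /\ disj K Ha /\ disj R Ga /\ disj R Ha /\ disj Ga Ha /\
  (forall x, P x <-> I x \/ K x \/ R x \/ Ga x \/ Ha x \/
                     x = c2 false \/ x = c2 true).

Definition T3 := forall l, R (cw l).

Definition T4 :=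
  (forall l u x, Gb l u x -> R l /\ K u) /\ (forall u x, Hb u x -> K u).

Definition T5 :=
  (forall x, ~ P x -> (exists l u, Gb l u x) \/ (exists u, Hb u x)) /\
  (forall l u v, R l -> K u -> K v ->
     disj P (Hb u) /\ disj P (Gb l v) /\ disj (Hb u) (Gb l v)).

Definition T6 := forall u a z, pi u a z -> K u /\ Ga a /\ isZ2 z.
Definition T7 := forall l b z, rho l b z -> R l /\ Ha b /\ isZ2 z.

Definition T8 := forall l u a v w, g l u a v w ->
  R l /\ K u /\ Ga a /\ Gb l u v /\ Gb l u w.

Definition T9 := forall u b x y, h u b x y ->
  K u /\ Ha b /\ Hb u x /\ Hb u y.

Definition T10 :=
  c2 false <> c2 true /\
  (forall a b, pl (c2 a) (c2 b) (c2 (addb a b))) /\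
  (forall a b z, pl (c2 a) (c2 b) z -> z = c2 (addb a b)).

(* + on A is a subgroup of prod_{Ix} Z_2 containing coprod_{Ix} Z_2,
   with projections given by pr (pr i a z : "the i-coordinate of a is z") *)
Definition subgroup_prod (A Ix : U -> Prop) (pr : U -> U -> U -> Prop) :=
  (forall a i, A a -> Ix i ->
     exists b, pr i a (c2 b) /\ forall b', pr i a (c2 b') -> b' = b) /\
  (forall a a', A a -> A a' ->
     (forall i b, Ix i -> pr i a (c2 b) -> pr i a' (c2 b)) -> a = a') /\
  (forall a a', A a -> A a' -> exists z, A z /\ pl a a' z) /\
  (forall a a' z, A a -> A a' -> pl a a' z ->
     A z /\ forall i b b', Ix i -> pr i a (c2 b) -> pr i a' (c2 b') ->
                           pr i z (c2 (addb b b'))) /\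
  (forall s : list U, (forall i, List.In i s -> Ix i) ->
     exists a, A a /\ forall i, Ix i -> (pr i a (c2 true) <-> List.In i s)).

Definition T11 := subgroup_prod Ga K pi.
Definition T12 := subgroup_prod Ha R rho.

Definition T13 :=
  (forall l u, R l -> K u ->
     (exists x, Gb l u x) /\
     forall x, Gb l u x ->
       (forall a, Ga a -> exists y, g l u a x y) /\
       (forall a y y', g l u a x y -> g l u a x y' -> y = y') /\
       (forall a a' y, g l u a x y -> g l u a' x y -> a = a') /\
       (forall y, Gb l u y -> exists a, Ga a /\ g l u a x y)) /\
  (forall l u a x y, g l u a x y -> g l u a y x) /\
  (forall l u a b c x y z, g l u a x y -> g l u b y z -> pl a b c ->
     g l u c x z).

Definition T14 :=
  (forall u, K u ->
     (exists x, Hb u x) /\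
     forall x, Hb u x ->
       (forall b, Ha b -> exists y, h u b x y) /\
       (forall b y y', h u b x y -> h u b x y' -> y = y') /\
       (forall b b' y, h u b x y -> h u b' x y -> b = b') /\
       (forall y, Hb u y -> exists b, Ha b /\ h u b x y)) /\
  (forall u a x y, h u a x y -> h u a y x) /\
  (forall u a b c x y z, h u a x y -> h u b y z -> pl a b c -> h u c x z).

Definition T15 :=
  forall l (xs : 'I_k -> U) y, Q l xs y ->
    (exists (us : 'I_k -> U) (w : U),
       (forall i, Gb (cw l) (us i) (xs i)) /\ Hb w y /\ faces us w) /\
    (forall s : {perm 'I_k}, Q l (fun i => xs (s i)) y).

Definition upd (xs : 'I_k -> U) (i0 : 'I_k) (x : U) : 'I_k -> U :=
  fun j => if j == i0 then x else xs j.

Definition T16 :=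
  forall l (xs : 'I_k -> U) y (i0 : 'I_k) u v x0' y',
    val i0 = 0 -> Q l xs y ->
    Gb (cw l) u (xs i0) -> Hb v y -> Gb (cw l) u x0' -> Hb v y' ->
    (forall a, g (cw l) u a (xs i0) x0' ->
       (Q l (upd xs i0 x0') y <-> pi v a (c2 false))) /\
    (forall b, h v b y y' ->
       (Q l xs y' <-> rho (cw l) b (c2 false))).

Definition T17 :=
  forall l u n (ii : 'I_n -> U) (vs : 'I_n -> 'I_k -> U) (ws : 'I_n -> U)
         (xs : 'I_n -> 'I_k -> U) (ys : 'I_n -> U),
    K u -> injective ii -> (forall j, I (ii j) /\ ~ mem (ii j) u) ->
    (forall j, facesOn (fun x => mem x u \/ x = ii j) (vs j) (ws j) /\
               forall i : 'I_k, val i = 0 -> vs j i = u) ->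
    (forall j (i : 'I_k), val i <> 0 -> Gb (cw l) (vs j i) (xs j i)) ->
    (forall j, Hb (ws j) (ys j)) ->
    exists x, forall j,
      Q l (fun i : 'I_k => if val i == 0 then x else xs j i) (ys j).

Definition theoryT :=
  T1 /\ T2 /\ T3 /\ T4 /\ T5 /\ T6 /\ T7 /\ T8 /\ T9 /\ T10 /\
  T11 /\ T12 /\ T13 /\ T14 /\ T15 /\ T16 /\ T17.

(* G^a canonically isomorphic via pi to coprod_K Z_2:
   a |-> (u |-> pi-projection) is a bijection onto finitely supported maps *)
Definition GaCanonIso :=
  (forall a, Ga a -> exists s : list U, (forall u, List.In u s -> K u) /\
      forall u, K u -> (pi u a (c2 true) <-> List.In u s)) /\
  (forall s : list U, (forall u, List.In u s -> K u) ->
      exists a, Ga a /\ forall u, K u -> (pi u a (c2 true) <-> List.In u s)) /\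
  (forall a a', Ga a -> Ga a' ->
     (forall u b, K u -> pi u a (c2 b) -> pi u a' (c2 b)) -> a = a').

(* H^a canonically isomorphic via rho to coprod_omega Z_2 (index l <-> c_l) *)
Definition HaCanonIso :=
  (forall b, Ha b -> exists s : list nat,
      forall l, rho (cw l) b (c2 true) <-> List.In l s) /\
  (forall s : list nat, exists b, Ha b /\
      forall l, (rho (cw l) b (c2 true) <-> List.In l s) /\
                (rho (cw l) b (c2 false) <-> ~ List.In l s)) /\
  (forall b b', Ha b -> Ha b' ->
     (forall l e, rho (cw l) b (c2 e) -> rho (cw l) b' (c2 e)) -> b = b').

Definition phi :=
  theoryT /\ (forall x, R x -> exists l, x = cw l) /\ GaCanonIso /\ HaCanonIso.

(* M has a solution: a solution for W = (omega x K(M)) u K(M);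
   f(l,u) = f1 l u and f(u) = f2 u (values off K(M) are irrelevant). *)
Definition hasSolution :=
  exists (f1 : nat -> U -> U) (f2 : U -> U),
    (forall l u, K u -> Gb (cw l) u (f1 l u)) /\
    (forall u, K u -> Hb u (f2 u)) /\
    (forall l (us : 'I_k -> U) w, faces us w ->
       Q l (fun i => f1 l (us i)) (f2 w)).

End TheoryDefs.

Definition substructure (k : nat) (M N : Lstr k) :=
  exists e : car M -> car N, injective e /\
    (forall x, @Ip _ M x <-> @Ip _ N (e x)) /\ (forall x, @Kp _ M x <-> @Kp _ N (e x)) /\
    (forall x, @Rp _ M x <-> @Rp _ N (e x)) /\ (forall x, @Pp _ M x <-> @Pp _ N (e x)) /\
    (forall x, @Ga _ M x <-> @Ga _ N (e x)) /\ (forall x, @Ha _ M x <-> @Ha _ N (e x)) /\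
    (forall x y, @memb _ M x y <-> @memb _ N (e x) (e y)) /\
    (forall x y, @Hb _ M x y <-> @Hb _ N (e x) (e y)) /\
    (forall x y z, @pi _ M x y z <-> @pi _ N (e x) (e y) (e z)) /\
    (forall x y z, @rho _ M x y z <-> @rho _ N (e x) (e y) (e z)) /\
    (forall x y z, @pl _ M x y z <-> @pl _ N (e x) (e y) (e z)) /\
    (forall x y z, @Gb _ M x y z <-> @Gb _ N (e x) (e y) (e z)) /\
    (forall x y z w, @hh _ M x y z w <-> @hh _ N (e x) (e y) (e z) (e w)) /\
    (forall x y z w v, @gg _ M x y z w v <-> @gg _ N (e x) (e y) (e z) (e w) (e v)) /\
    (forall l xs y, @Q _ M l xs y <-> @Q _ N l (fun i => e (xs i)) (e y)) /\
    (forall a, e (@c2 _ M a) = @c2 _ N a) /\ (forall l, e (@cw _ M l) = @cw _ N l).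

(* Main.v *)
Require Import Defs.
From mathcomp Require Import all_boot all_fingroup.
From Stdlib Require List FinFun.
From Stdlib Require Import Classical FunctionalExtensionality IndefiniteDescription.

Lemma image_list (A B : Type) (e : A -> B) (einj : injective e) (s : list B) :
  exists s' : list A, forall m, List.In m s' <-> List.In (e m) s.
Proof.
elim: s => [|x s [s' IH]]; first by exists nil.
case: (classic (exists m, e m = x)) => [[m0 Hm0]|nm].
- exists (m0 :: s') => m /=; split.
  + by case=> [<-|/IH]; [left|right].
  + case=> [h|/IH]; [left|right] => //. by apply: einj; rewrite Hm0 h.
- exists s' => m /=; split; first by move/IH; right.
  case=> [h|/IH] //. by case: nm; exists m.
Qed.

Theorem mainTheorem9 (k : nat) (hk : 1 < k) (M N : Lstr k) :
  phi M -> phi N -> substructure M N -> hasSolution N -> hasSolution M.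
Proof.
move=> [[T1M [T2M [T3M [T4M [T5M [T6M [T7M [T8M [T9M [T10M [T11M [T12M [T13M [T14M [T15M [T16M T17M]]]]]]]]]]]]]]]] [RM [GaM HaM]]].
move=> [[T1N [T2N [T3N [T4N [T5N [T6N [T7N [T8N [T9N [T10N [T11N [T12N [T13N [T14N [T15N [T16N T17N]]]]]]]]]]]]]]]] [RN [GaN HaN]]].
move=> [e [einj [eI [eK [eR [eP [eGa [eHa [emem [eHb [epi [erho [epl [eGb [ehh [egg [eQ [ec2 ecw]]]]]]]]]]]]]]]]]].
move=> [fN1 [fN2 [fN1G [fN2H fNQ]]]].
have H2 : forall u, exists y, @Kp _ M u -> @Hb _ M u y /\ e y = fN2 (e u).
  move=> u; case: (classic (@Kp _ M u)) => Ku; last by exists (c2 M false).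
  have KNu : @Kp _ N (e u) by apply/eK.
  case: T14M => [T14a _]; case: (T14a u Ku) => [[x Hx] hx].
  have HNx : @Hb _ N (e u) (e x) by apply/eHb.
  case: T14N => [T14b _]; case: (T14b _ KNu) => _ hN.
  case: (hN _ HNx) => _ [hfun [_ hsurj]].
  case: (hsurj _ (fN2H _ KNu)) => b [Hab hb].
  case: HaN => [HaN1 [_ HaN3]]; case: (HaN1 _ Hab) => sl Hsl.
  case: HaM => [_ [HaM2 _]]; case: (HaM2 sl) => b' [Hab' Hb'].
  have eb : e b' = b.
    apply: HaN3 => //; first by apply/eHa.
    move=> l ev H.
    have H' : @rho _ M (cw M l) b' (c2 M ev) by apply/erho; rewrite ecw ec2.
    case: ev H H' => H H'.
      by apply/Hsl; apply/(Hb' l).1.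
    have nin : ~ List.In l sl by apply/(Hb' l).2.
    case: T12N => [cl1 _]; case: (cl1 b (cw N l) Hab (T3N l)) => bb [Hbb _].
    by case: bb Hbb => // /Hsl.
  case: (hx x Hx) => [hy _]; case: (hy b' Hab') => y hxy.
  exists y => _; split; first by case: (T9M _ _ _ _ hxy) => _ [_ [_ ?]].
  apply: (hfun b) => //.
  by rewrite -eb; apply/ehh.
have G1 : forall l u, exists y, @Kp _ M u -> @Gb _ M (cw M l) u y /\
   forall w, @Kp _ M w -> exists c, @Ga _ N c /\
     @gg _ N (cw N l) (e u) c (fN1 l (e u)) (e y) /\ @Defs.pi _ N (e w) c (c2 N false).
  move=> l u; case: (classic (@Kp _ M u)) => Ku; last by exists (c2 M false).
  have KNu : @Kp _ N (e u) by apply/eK.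
  case: T13M => [T13a _]; case: (T13a _ _ (T3M l) Ku) => [[x Gx] hx].
  have GNx : @Gb _ N (cw N l) (e u) (e x) by rewrite -ecw; apply/eGb.
  case: T13N => [T13b [gsym gcomp]]; case: (T13b _ _ (T3N l) KNu) => _ hN.
  case: (hN _ GNx) => _ [_ [_ gsurj]].
  case: (gsurj _ (fN1G l _ KNu)) => a [Gaa ga].
  case: GaN => [GaN1 _]; case: (GaN1 _ Gaa) => s [sK Hs].
  case: (@image_list _ _ e einj s) => s' Hs'.
  case: GaM => [_ [GaM2 _]].
  have s'K : forall u, List.In u s' -> @Kp _ M u.
    by move=> u' /Hs' /sK /eK.
  case: (GaM2 s' s'K) => a' [Gaa' Ha'].
  case: (hx x Gx) => [hy _]; case: (hy a' Gaa') => y gy.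
  exists y => _; split; first by case: (T8M _ _ _ _ _ gy) => _ [_ [_ [_ ?]]].
  move=> w Kw.
  have KNw : @Kp _ N (e w) by apply/eK.
  case: T11N => [cl1 [_ [cl3 [cl4 _]]]].
  have GNa' : @Ga _ N (e a') by apply/eGa.
  case: (cl3 _ _ GNa' Gaa) => c [Gac plc].
  exists c; split => //.
  have gN : @gg _ N (cw N l) (e u) (e a') (e x) (e y) by rewrite -ecw; apply/egg.
  split.
    apply gsym; apply: (gcomp _ _ _ _ _ _ _ _ (gsym _ _ _ _ _ gN) ga plc).
  case: (cl1 _ _ GNa' KNw) => b1 [pb1 u1].
  case: (cl1 _ _ Gaa KNw) => b2 [pb2 u2].
  have := (cl4 _ _ _ GNa' Gaa plc).2 _ _ _ KNw pb1 pb2.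
  suff -> : b1 = b2 by rewrite addbb.
  case: b1 pb1 u1 => pb1 u1.
    have pM : @Defs.pi _ M w a' (c2 M true) by apply/epi; rewrite ec2.
    have : List.In w s' by apply/Ha'.
    move/Hs' => /(Hs _ KNw).2 hp. exact: u2 _ hp.
  case: b2 pb2 u2 => // pb2 u2.
  have : List.In w s' by apply/Hs'; apply/(Hs _ KNw).
  move/(Ha' _ Kw) => pM.
  have pN : @Defs.pi _ N (e w) (e a') (c2 N true) by rewrite -ec2; apply/epi.
  by have := u1 _ pN.
have [f1 f1P] : exists f1 : nat -> car M -> car M, forall l u, @Kp _ M u ->
   @Gb _ M (cw M l) u (f1 l u) /\
   forall w, @Kp _ M w -> exists c, @Ga _ N c /\
     @gg _ N (cw N l) (e u) c (fN1 l (e u)) (e (f1 l u)) /\ @Defs.pi _ N (e w) c (c2 N false).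
  exists (fun l u => proj1_sig (constructive_indefinite_description _ (G1 l u))).
  move=> l u; exact: (proj2_sig (constructive_indefinite_description _ (G1 l u))).
have [f2 f2P] : exists f2 : car M -> car M, forall u, @Kp _ M u ->
   @Hb _ M u (f2 u) /\ e (f2 u) = fN2 (e u).
  exists (fun u => proj1_sig (constructive_indefinite_description _ (H2 u))).
  move=> u; exact: (proj2_sig (constructive_indefinite_description _ (H2 u))).
have memimg : forall u x, @Kp _ M u -> @memb _ N x (e u) -> exists m, x = e m.
  move=> u x Ku hx.
  case: T1M => [_ [_ [T1Mc _]]]; case: (T1Mc u Ku) => Lm [lm [ndm hm]].
  have KNu : @Kp _ N (e u) by apply/eK.
  case: T1N => [_ [_ [T1Nc _]]]; case: (T1Nc _ KNu) => Ln [ln [ndn hn]].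
  have incl1 : List.incl (List.map e Lm) Ln.
    move=> z /List.in_map_iff [m [<- Hm]]. apply/hn. apply/emem. by apply/hm.
  have nd : List.NoDup (List.map e Lm) := FinFun.Injective_map_NoDup einj ndm.
  have le1 : (length Ln <= length (List.map e Lm))%coq_nat.
    by rewrite List.length_map lm ln.
  have := List.NoDup_length_incl nd le1 incl1 x ((hn x).1 hx).
  by move/List.in_map_iff => [m [<- _]]; exists m.
have facesT : forall us w, @faces _ M us w -> @faces _ N (fun i => e (us i)) (e w).
  move=> us w [S [[sl [sll [sln sli]]] [SI [Kw [memw [hus [injus neq]]]]]]].
  exists (fun x => exists m, S m /\ x = e m); split.
    exists (List.map e sl); split; first by rewrite List.length_map.
    split; first exact: FinFun.Injective_map_NoDup.
    move=> x; split.
      by move=> [m [Sm ->]]; apply: List.in_map; apply/sli.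
    by move/List.in_map_iff => [m [<- Hm]]; exists m; split => //; apply/sli.
  split; first by move=> x [m [Sm ->]]; apply/eI; exact: SI.
  split; first by apply/eK.
  split.
    move=> x hx; case: (memimg w x Kw hx) => m Em; subst x.
    by exists m; split => //; apply: memw; apply/emem.
  split.
    move=> i; case: (hus i) => Kui memui; split; first by apply/eK.
    move=> x hx; case: (memimg _ x Kui hx) => m Em; subst x.
    by exists m; split => //; apply: memui; apply/emem.
  split; first by move=> i j /einj; exact: injus.
  by move=> i /einj; exact: neq i.
exists f1, f2; split; first by move=> l u Ku; case: (f1P l u Ku).
split; first by move=> u Ku; case: (f2P u Ku).
move=> l us w Hf.
have Fn := facesT _ _ Hf.
have Kw : @Kp _ M w by case: Hf => S [_ [_ [Kw _]]].
have Kus : forall i, @Kp _ M (us i).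
  by case: Hf => S [_ [_ [_ [_ [hus _]]]]] i; case: (hus i).
apply/eQ.
have Q0 := fNQ l _ _ Fn.
rewrite -(f2P w Kw).2 in Q0.
have HNy : @Hb _ N (e w) (e (f2 w)) by apply/eHb; case: (f2P w Kw).
pose i0 : 'I_k := Ordinal (ltnW hk).
have step : forall (xs : 'I_k -> car N) i, @Q _ N l xs (e (f2 w)) ->
    xs i = fN1 l (e (us i)) ->
    @Q _ N l (upd xs i (e (f1 l (us i)))) (e (f2 w)).
  move=> xs i Qxs xsi.
  have Q1 : @Q _ N l (fun j => xs (tperm i0 i j)) (e (f2 w)) := (T15N l xs _ Qxs).2 (tperm i0 i).
  have KNu : @Kp _ N (e (us i)) by apply/eK.
  case: (f1P l (us i) (Kus i)) => Gnew hc; case: (hc w Kw) => c [Gac [gc pic]].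
  have Gx0 : @Gb _ N (cw N l) (e (us i)) (xs (tperm i0 i i0)) by rewrite tpermL xsi; apply: fN1G.
  have GN : @Gb _ N (cw N l) (e (us i)) (e (f1 l (us i))) by rewrite -ecw; apply/eGb.
  case: (T16N l _ _ i0 _ _ _ _ erefl Q1 Gx0 HNy GN HNy) => /(_ c) H _.
  have Q2 : @Q _ N l (upd (fun j => xs (tperm i0 i j)) i0 (e (f1 l (us i)))) (e (f2 w)).
    by apply/H => //; rewrite tpermL xsi.
  have := (T15N l _ _ Q2).2 (tperm i0 i).
  congr (@Q _ N l _ _); apply: functional_extensionality => j.
  rewrite /upd tpermK.
  have -> : (tperm i0 i j == i0) = (j == i).
    apply/eqP/eqP => [h|->]; last exact: tpermR.
    by rewrite -(tpermK i0 i j) h tpermL.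
  done.
have iter : forall n, n <= k ->
    @Q _ N l (fun j : 'I_k => if val j < n then e (f1 l (us j)) else fN1 l (e (us j))) (e (f2 w)).
  elim=> [_|n IH hn].
    by move: Q0; congr (@Q _ N l _ _).
  have := step _ (Ordinal hn) (IH (ltnW hn)); rewrite /= ltnn => /(_ erefl).
  congr (@Q _ N l _ _); apply: functional_extensionality => j.
  rewrite /upd.
  case: eqP => [->|nj] /=; first by rewrite ltnSn.
  have -> : (val j < n.+1) = (val j < n).
    rewrite ltnS leq_eqVlt.
    have -> : (val j == n) = false.
      by apply/negP => /eqP h; apply: nj; apply: val_inj.
    done.
  done.
move: (iter k (leqnn k)); congr (@Q _ N l _ _); apply: functional_extensionality => j.
by rewrite ltn_ord.
Qed.
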